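(* Let $C_n$ denote the $n$th Catalan number, with $C_0=C_1=1$. Then for every integer $n>1$, $$C_n=\sum_{j\ge 1}(-1)^{j-1}\,C_{n-j}\binom{n-j+1}{j},$$ where the sum runs over $1\le j\le n$.
   Context: $C_n=\frac{1}{n+1}\binom{2n}{n}$. Convention: $\binom{a}{b}=0$ if $b<0$ or $b>a$. *)

(* Defs.v *)
From mathcomp Require Import all_boot all_order all_algebra.
Set Implicit Arguments. Unset Strict Implicit. Unset Printing Implicit Defensive.

(* Catalan number C_n = binom(2n, n) / (n+1); the division is exact. *)
Definition catalan (n : nat) : nat := 'C(2 * n, n) %/ n.+1.

(* Main.v *)
Require Import Defs.
From mathcomp Require Import all_boot all_order all_algebra.
From mathcomp Require Import ring zify.
Import GRing.Theory Num.Theory.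

Lemma catK m : (m.+1 * catalan m = 'C(2 * m, m))%N.
Proof.
rewrite /catalan mulnC divnK //.
have E := mul_bin_left (2 * m) m.
have -> : ('C(2 * m, m) = ('C(2 * m, m) - 'C(2 * m, m.+1)) * m.+1)%N.
  have : (2 * m - m = m)%N by lia.
  move=> H; rewrite H in E.
  have Hle : ('C(2 * m, m.+1) <= 'C(2 * m, m))%N.
    have : (m.+1 * 'C(2 * m, m.+1) <= m.+1 * 'C(2 * m, m))%N by rewrite E; nia.
    by rewrite leq_pmul2l.
  rewrite mulnBl; nia.
exact: dvdn_mull.
Qed.

Lemma catS m : ((m + 2) * catalan m.+1 = 2 * (2 * m + 1) * catalan m)%N.
Proof.
apply/eqP; rewrite -(eqn_pmul2l (ltn0Sn m)); apply/eqP.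
have -> : (m.+1 * ((m + 2) * catalan m.+1) = m.+1 * (m.+2 * catalan m.+1))%N by ring.
rewrite catK.
have -> : (m.+1 * (2 * (2 * m + 1) * catalan m) = 2 * (2 * m + 1) * (m.+1 * catalan m))%N by ring.
rewrite catK.
have E1 := mul_bin_diag (2 * m.+1) m.
have E2 := mul_bin_down (2 * m).+1 m.
have H1 : (2 * m.+1).-1 = (2 * m).+1 by rewrite mulnS.
rewrite H1 /= in E1.
have H2 : ((2 * m).+1 - m = m.+1)%N by lia.
rewrite H2 /= in E2.
have H3 : (2 * m.+1 = (2 * m).+2)%N by rewrite mulnS.
rewrite H3 in E1 *.
nia.
Qed.

Lemma binid m k : ((m + k + 1) * (m + k + 2) * 'C(m.+1, k.+1) =
   m * m.+1 * 'C(m.-1, k.+1) + 2 * (2 * m + 1) * m.+1 * 'C(m, k))%N.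
Proof.
have E1 := mul_bin_left m k.
have E2 := mul_bin_diag m.+1 k.
have E3 := mul_bin_down m k.+1.
rewrite /= in E2.
apply/eqP; rewrite -(eqn_pmul2l (ltn0Sn k)); apply/eqP.
case: (leqP k m) => hkm.
- have [d hd] : exists d, m = (k + d)%N by exists (m - k); lia.
  subst m.
  rewrite (_ : k + d - k = d)%N in E1; last by lia.
  rewrite (_ : k + d - k.+1 = d.-1)%N in E3; last by lia.
  move: E1 E2 E3.
  set B := 'C(k + d, k); set X := 'C((k + d).+1, k.+1);
  set Y := 'C(k + d, k.+1); set Z := 'C((k + d).-1, k.+1).
  move=> E1 E2 E3.
  have -> : (k.+1 * ((k + d + k + 1) * (k + d + k + 2) * X) =
             (k + d + k + 1) * (k + d + k + 2) * (k.+1 * X))%N by ring.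
  rewrite -E2.
  have -> : (k.+1 * ((k + d) * (k + d).+1 * Z + 2 * (2 * (k + d) + 1) * (k + d).+1 * B)
      = ((k + d).+1 * ((k + d) * Z)) * k.+1 + k.+1 * 2 * (2 * (k + d) + 1) * (k + d).+1 * B)%N by ring.
  rewrite E3.
  have -> : ((k + d).+1 * (d.-1 * Y) * k.+1 = (k + d).+1 * d.-1 * (k.+1 * Y))%N by ring.
  rewrite E1.
  clearbody B X Y Z; clear E1 E2 E3 hkm; case: d => [|e] /=; ring.
- rewrite !bin_small in E1 E2 E3 *; try lia.
Qed.

Lemma key m k : ((m + k + 1) * (m + k + 2) * ('C(m.+1, k.+1) * catalan m) =
   (m * m.+1 * 'C(m.-1, k.+1)) * catalan m + m.+1 * 'C(m, k) * ((m + 2) * catalan m.+1))%N.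
Proof.
rewrite catS mulnA binid; ring.
Qed.

Local Open Scope ring_scope.

Lemma partial n k : (k <= n)%N ->
  (n * n.+1)%:Z * \sum_(i < k.+1) ((-1) ^+ i * (catalan (n - i))%:Z * ('C(n - i + 1, i))%:Z)
  = (-1) ^+ k * ((n - k) * (n - k).+1 * 'C((n - k).-1, k) * catalan (n - k))%:Z.
Proof.
elim: k => [|k IH] hk.
  rewrite big_ord1 /= subn0 !bin0 expr0 !mul1r mulr1 -!PoszM; congr Posz; ring.
rewrite big_ord_recr /= mulrDr IH; last by lia.
have [m hm] : exists m, n = (m + k.+1)%N by exists (n - k.+1)%N; lia.
subst n.
rewrite (_ : (m + k.+1 - k = m.+1)%N); last by lia.
rewrite (_ : (m + k.+1 - k.+1 = m)%N); last by lia.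
have K := key m k.
have /(congr1 Posz) := K; rewrite PoszD => {}K.
rewrite addn1 /=.
have -> : ((m + k.+1) * (m + k.+1).+1)%:Z * ((-1) ^+ k.+1 * (catalan m)%:Z * ('C(m.+1, k.+1))%:Z)
   = - (-1) ^+ k * ((m + k + 1) * (m + k + 2) * ('C(m.+1, k.+1) * catalan m))%N%:Z.
  rewrite !PoszM exprS; rewrite !(addnS, addSn, addn1, addn2, addn0); ring.
rewrite K exprS.
rewrite (_ : (m + 2 = m.+2)%N) in K *; last by lia.
rewrite !PoszM; ring.
Qed.

Theorem theorem2 (n : nat) : (1 < n)%N ->
  (catalan n)%:Z =
  \sum_(1 <= j < n.+1) (-1) ^+ (j.-1) * (catalan (n - j))%:Z * ('C(n - j + 1, j))%:Z.
Proof.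
move=> hn.
have P := partial n n (leqnn n).
rewrite subnn !mul0n mulr0 in P.
have Z : \sum_(i < n.+1) ((-1) ^+ i * (catalan (n - i))%:Z * ('C(n - i + 1, i))%:Z) = 0.
  move: P => /eqP; rewrite mulf_eq0 => /orP [|/eqP //].
  by rewrite eqz_nat muln_eq0; case: n hn.
rewrite -(big_mkord xpredT (fun i => (-1) ^+ i * (catalan (n - i))%:Z * ('C(n - i + 1, i))%:Z)) in Z.
rewrite big_ltn // subn0 bin0 expr0 !mulr1 mul1r in Z.
have E : \sum_(1 <= i < n.+1) ((-1) ^+ i * (catalan (n - i))%:Z * ('C(n - i + 1, i))%:Z) =
  - \sum_(1 <= j < n.+1) (-1) ^+ (j.-1) * (catalan (n - j))%:Z * ('C(n - j + 1, j))%:Z.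
  rewrite -sumrN; apply: eq_big_nat => j /andP [hj _].
  case: j hj => [//|j] _ /=; rewrite exprS; ring.
rewrite E in Z.
by apply/eqP; rewrite -subr_eq0 Z.
Qed.
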